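(* Let $G$ be a BTB graph and $d\ge1$. Sending a circuit configuration $(V,\mu)$ on $G$ with vectors in $\mathbb C^{d+1}$ to the map $w\mapsto[V(w)]\in\mathbb{CP}^d$ induces a one-to-one correspondence between gauge-equivalence classes of circuit configurations on $G$ and TCD maps on $G$ into $\mathbb{CP}^d$.
   Context: A BTB graph is a planar bipartite graph (black $B$, white $W$, edges $E$) embedded in a disk or cactus with every black vertex of degree $3$. A TCD map is $T:W\to\mathbb{CP}^d$ such that for each black vertex the images of its three white neighbours are pairwise distinct and lie on a common line. A vector-relation configuration (VRC) on $G$ is a pair consisting of nonzero vectors $V(w)\in\mathbb C^{d+1}$ for $w\in W$ and, for each black vertex $b$, a linear relation $\sum_{bw\in E}\mu(bw)V(w)=0$ with edge weights $\mu(bw)\in\mathbb C$. It is a circuit configuration if for every $b$ the vectors $\{V(w):bw\in E\}$ form a circuit (a minimal linearly dependent set). A gauge transformation, given by $\lambda:B\sqcup W\to\mathbb C^*$, sends $V(w)\mapsto\lambda(w)V(w)$, the relation at $b$ to $\lambda(b)$ times it, and $\mu(bw)\mapsto\lambda(b)\lambda(w)^{-1}\mu(bw)$. *)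

(* Defs.v *)
From HB Require Import structures.
From mathcomp Require Import all_boot all_order all_algebra.
From mathcomp Require Import complex.
From mathcomp Require Import reals.
Set Implicit Arguments. Unset Strict Implicit. Unset Printing Implicit Defensive.
Import Order.TTheory GRing.Theory Num.Theory.
Local Open Scope ring_scope.

Section Defs.
Variables (K : fieldType) (B W : finType) (E : B -> W -> bool) (d : nat).

Definition black_deg3 : Prop := forall b : B, #|[set w | E b w]| = 3%N.

(* The point [v] of the projective space P(K^(d+1)), represented canonically
   as the row space <<v>> (a square matrix) of the nonzero row vector v. *)
Definition proj_pt (v : 'rV[K]_(d.+1)) : 'M[K]_(d.+1) := <<v>>%MS.

Definition is_proj_pt (P : 'M[K]_(d.+1)) : Prop :=
  \rank P = 1%N /\ <<P>>%MS = P.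

Definition is_proj_line (L : 'M[K]_(d.+1)) : Prop := \rank L = 2%N.

Definition TCD_map (T : W -> 'M[K]_(d.+1)) : Prop :=
  (forall w, is_proj_pt (T w)) /\
  (forall b : B,
     (forall w1 w2, E b w1 -> E b w2 -> w1 != w2 -> T w1 <> T w2) /\
     (exists L, is_proj_line L /\ forall w, E b w -> (T w <= L)%MS)).

Definition lin_dep (V : W -> 'rV[K]_(d.+1)) (S : {set W}) : Prop :=
  exists c : W -> K, (exists2 w, w \in S & c w != 0) /\
    \sum_(w in S) c w *: V w = 0.

Definition is_circuit (V : W -> 'rV[K]_(d.+1)) (S : {set W}) : Prop :=
  lin_dep V S /\ forall S' : {set W}, S' \proper S -> ~ lin_dep V S'.

Definition nbhd (b : B) : {set W} := [set w | E b w].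

Definition VRC (V : W -> 'rV[K]_(d.+1)) (mu : B -> W -> K) : Prop :=
  (forall w, V w != 0) /\
  (forall b, (exists2 w, E b w & mu b w != 0) /\
             \sum_(w in nbhd b) mu b w *: V w = 0).

Definition circuit_config (V : W -> 'rV[K]_(d.+1)) (mu : B -> W -> K) : Prop :=
  VRC V mu /\ forall b, is_circuit V (nbhd b).

Definition gauge_equiv (V : W -> 'rV[K]_(d.+1)) (mu : B -> W -> K)
    (V' : W -> 'rV[K]_(d.+1)) (mu' : B -> W -> K) : Prop :=
  exists (lB : B -> K) (lW : W -> K),
    (forall b, lB b != 0) /\ (forall w, lW w != 0) /\
    (forall w, V' w = lW w *: V w) /\
    (forall b w, E b w -> mu' b w = lB b * (lW w)^-1 * mu b w).

End Defs.

(* Main.v *)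
Require Import Defs.
From HB Require Import structures.
From mathcomp Require Import all_boot all_order all_algebra.
From mathcomp Require Import complex.
From mathcomp Require Import reals.
Set Implicit Arguments. Unset Strict Implicit. Unset Printing Implicit Defensive.
Import Order.TTheory GRing.Theory Num.Theory.
Local Open Scope ring_scope.

Section Gen.
Variable K : fieldType.
Variables (B W : finType) (E : B -> W -> bool) (d : nat).
Local Notation vec := 'rV[K]_(d.+1).

Definition indep (u v : vec) := forall a b : K, a *: u + b *: v = 0 -> a = 0 /\ b = 0.

Lemma sum2 (F : W -> vec) p q : p != q -> \sum_(w in [set p; q]) F w = F p + F q.
Proof. by move=> npq; rewrite big_setU1 ?inE //= big_set1. Qed.

Lemma sum3 (F : W -> vec) x y z : x != y -> x != z -> y != z ->
  \sum_(w in [set x; y; z]) F w = F x + (F y + F z).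
Proof.
move=> nxy nxz nyz; rewrite setUC big_setU1 ?inE ?negb_or 1?eq_sym ?nxz 1?eq_sym ?nyz //= sum2 //.
by rewrite addrC -addrA.
Qed.

Lemma lin_dep_mono (V : W -> vec) (S1 S2 : {set W}) : S1 \subset S2 -> lin_dep V S1 -> lin_dep V S2.
Proof.
move=> sub [c [[w wS cw] sc]].
exists (fun w => if w \in S1 then c w else 0); split.
  by exists w; [exact: (subsetP sub) | rewrite wS].
rewrite -[RHS]sc [RHS]big_mkcond [LHS]big_mkcond; apply: eq_bigr => x _.
case: (boolP (x \in S1)) => h; first by rewrite (subsetP sub _ h).
by rewrite scale0r; case: (x \in S2).
Qed.

Lemma not_dep2 (V : W -> vec) p q : p != q -> indep (V p) (V q) -> ~ lin_dep V [set p; q].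
Proof.
move=> npq ind [c [[w wS cw] sc]]; rewrite sum2 // in sc.
have [h1 h2] := ind _ _ sc.
by move: wS cw; rewrite !inE => /orP[] /eqP ->; rewrite ?h1 ?h2 eqxx.
Qed.

Lemma circuit_indep (V : W -> vec) (S : {set W}) p q : is_circuit V S -> #|S| = 3%N ->
  p \in S -> q \in S -> p != q -> indep (V p) (V q).
Proof.
move=> [_ hmin] c3 pS qS npq a b h.
have pr : [set p; q] \proper S.
  rewrite properEcard cards2 npq c3 andbT.
  by apply/subsetP => x; rewrite !inE => /orP[] /eqP ->.
have qnp : q != p by rewrite eq_sym.
have dep : (a != 0) || (b != 0) -> lin_dep V [set p; q].
  move=> hab; exists (fun w => if w == p then a else b); split; last first.
    by rewrite (sum2 (fun w => (if w == p then a else b) *: V w)) // eqxx (negbTE qnp).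
  case/orP: hab => h0.
    by exists p; [rewrite !inE eqxx | rewrite eqxx].
  by exists q; [rewrite !inE eqxx orbT | rewrite (negbTE qnp)].
case: (eqVneq a 0) => ha; case: (eqVneq b 0) => hb //.
- by exfalso; apply: (hmin _ pr); apply: dep; rewrite hb orbT.
- by exfalso; apply: (hmin _ pr); apply: dep; rewrite ha.
- by exfalso; apply: (hmin _ pr); apply: dep; rewrite ha.
Qed.

Lemma card3 (S : {set W}) : #|S| = 3%N ->
  exists x y z, [/\ x != y, x != z, y != z & S = [set x; y; z]].
Proof.
move=> c3; have : (0 < #|S|)%N by rewrite c3.
case/card_gt0P => x xS.
move: c3; rewrite (cardsD1 x) xS add1n => -[] /eqP /cards2P [y [z [nyz eq]]].
have : y \in S :\ x by rewrite eq !inE eqxx.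
rewrite !inE => /andP[nyx _].
have : z \in S :\ x by rewrite eq !inE eqxx orbT.
rewrite !inE => /andP[nzx _].
exists x, y, z; split; [by rewrite eq_sym|by rewrite eq_sym|by []|].
by rewrite -{1}(setD1K xS) eq setUA.
Qed.

Lemma prop_gen (u v : vec) k : u = k *: v -> u != 0 -> proj_pt u = proj_pt v.
Proof.
move=> -> u0; have k0 : k != 0 by apply: contraNneq u0 => ->; rewrite scale0r.
by apply/eq_genmx; exact: eqmx_scale.
Qed.

Lemma gen_prop (u v : vec) : proj_pt u = proj_pt v -> exists k, u = k *: v.
Proof. by move/genmxP => /andP[uv _]; exact/sub_rVP. Qed.

Lemma neq_indep (u v : vec) : u != 0 -> v != 0 -> proj_pt u <> proj_pt v -> indep u v.
Proof.
move=> u0 v0 nuv a b h; case: (eqVneq a 0) => ha.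
  subst; move: h; rewrite scale0r add0r => /eqP; rewrite scaler_eq0 (negbTE v0) orbF.
  by move/eqP.
have : a *: u = - (b *: v) by apply/eqP; rewrite -subr_eq0 opprK h.
move/(congr1 (fun x => a^-1 *: x)); rewrite scalerA mulVf // scale1r => eu.
exfalso; apply: nuv; apply: (@prop_gen _ _ (- (a^-1 * b))) => //.
by rewrite eu scalerN scalerA scaleNr.
Qed.

Lemma indep_nz (u v : vec) : indep u v -> u != 0 /\ v != 0.
Proof.
move=> ind; split; apply/negP => /eqP e.
  have [] := ind 1 0; first by rewrite e scaler0 scale0r addr0.
  by move=> /eqP; rewrite oner_eq0.
have [] := ind 0 1; first by rewrite e scaler0 scale0r addr0.
by move=> _ /eqP; rewrite oner_eq0.
Qed.

Lemma rank2 (u v : vec) : indep u v -> \rank (u + v)%MS = 2%N.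
Proof.
move=> ind; have [u0 v0] := indep_nz ind.
have cap : (u :&: v <= (0 : 'M_(d.+1)))%MS.
  apply/rV_subP => x; rewrite sub_capmx => /andP[/sub_rVP [a ha] /sub_rVP [b hb]].
  have : a *: u + (- b) *: v = 0 by rewrite -ha scaleNr -hb subrr.
  by case/ind => a0 _; rewrite ha a0 scale0r sub0mx.
have := (mxrank_adds_leqif u v).2; rewrite cap => /eqP ->.
by rewrite !rank_rV u0 v0.
Qed.

Lemma span2 (L : 'M[K]_(d.+1)) (u v x : vec) : \rank L = 2%N -> indep u v ->
  (u <= L)%MS -> (v <= L)%MS -> (x <= L)%MS -> exists a b, x = a *: u + b *: v.
Proof.
move=> rL ind uL vL xL.
have sub : (u + v <= L)%MS by rewrite addsmx_sub uL vL.
have : (u + v == L)%MS by rewrite -(mxrank_leqif_eq sub).2 rank2 // rL.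
case/andP => _ Luv.
have /sub_addsmxP [[p q] /= ->] := submx_trans xL Luv.
have /sub_rVP [a ->] := submxMl p u.
have /sub_rVP [b ->] := submxMl q v.
by exists a, b.
Qed.

Lemma circuit_unique (V : W -> vec) (S : {set W}) (c c' : W -> K) :
  is_circuit V S -> (exists2 w, w \in S & c w != 0) ->
  \sum_(w in S) c w *: V w = 0 -> \sum_(w in S) c' w *: V w = 0 ->
  exists l, forall w, w \in S -> c' w = l * c w.
Proof.
move=> [_ hmin] [w0 w0S cw0] sc sc'.
pose l := c' w0 / c w0; exists l => w wS.
case: (eqVneq (c' w) (l * c w)) => // ne; exfalso.
apply: (hmin (S :\ w0)); first exact: properD1.
pose e := fun w => c' w - l * c w.
have ew0 : e w0 = 0 by rewrite /e /l divfK // subrr.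
have nww0 : w != w0 by apply: contraNneq ne => ->; rewrite /l divfK.
exists e; split.
  by exists w; [rewrite !inE nww0 wS | rewrite /e subr_eq0].
have hs : \sum_(w in S) e w *: V w = 0.
  rewrite /e; under eq_bigr do rewrite scalerBl -scalerA.
  by rewrite sumrB -scaler_sumr sc sc' scaler0 subrr.
rewrite (eq_bigl (fun i => (i \in S) && (i != w0))) => [|i]; last by rewrite !inE andbC.
by rewrite -[RHS]hs [RHS](bigD1 w0) //= ew0 scale0r add0r.
Qed.

Lemma circ3 (V : W -> vec) (S : {set W}) :
  (forall p q, p \in S -> q \in S -> p != q -> indep (V p) (V q)) ->
  #|S| = 3%N -> lin_dep V S -> is_circuit V S.
Proof.
move=> ind c3 dep; split => // S' /properP [sub [t tS tS']] dS'.
have : lin_dep V (S :\ t).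
  apply: lin_dep_mono dS'; apply/subsetP => x xS'; rewrite !inE (subsetP sub _ xS') andbT.
  by apply: contraNneq tS' => <-.
move: c3; rewrite (cardsD1 t) tS add1n => -[] /eqP /cards2P [p [q [npq eq]]].
have : p \in S :\ t by rewrite eq !inE eqxx.
rewrite !inE => /andP[_ pS].
have : q \in S :\ t by rewrite eq !inE eqxx orbT.
rewrite !inE => /andP[_ qS].
by rewrite eq; apply: not_dep2 => //; apply: ind.
Qed.

End Gen.

Theorem main_gen (K : fieldType) (B W : finType) (E : B -> W -> bool)
    (d : nat) (hdeg : black_deg3 E) :
  [/\ forall (V : W -> 'rV[K]_(d.+1)) (mu : B -> W -> K),
        circuit_config E V mu -> TCD_map E (fun w => proj_pt (V w)),
      forall (V V' : W -> 'rV[K]_(d.+1)) (mu mu' : B -> W -> K),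
        circuit_config E V mu -> circuit_config E V' mu' ->
        (gauge_equiv E V mu V' mu' <-> (forall w, proj_pt (V w) = proj_pt (V' w)))
    & forall T : W -> 'M[K]_(d.+1), TCD_map E T ->
        exists (V : W -> 'rV[K]_(d.+1)) (mu : B -> W -> K),
          circuit_config E V mu /\ forall w, proj_pt (V w) = T w].
Proof.
split.
- move=> V mu [[V0 hrel] circ]; split.
    by move=> w; split; [rewrite /proj_pt genmxE rank_rV V0 | exact: genmx_id].
  move=> b; have c3 : #|nbhd E b| = 3%N := hdeg b.
  split.
    move=> w1 w2 e1 e2 n12 eq; have [k hk] := gen_prop eq.
    have h : indep (V w1) (V w2).
      by apply: circuit_indep (circ b) c3 _ _ n12; rewrite inE.
    have [] := h 1 (-k); first by rewrite hk scale1r scaleNr subrr.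
    by move/eqP; rewrite oner_eq0.
  have [x [y [z [nxy nxz nyz eS]]]] := card3 c3.
  have xS : x \in nbhd E b by rewrite eS !inE eqxx.
  have yS : y \in nbhd E b by rewrite eS !inE eqxx orbT.
  have ind := circuit_indep (circ b) c3 xS yS nxy.
  have [[c [[w wS cw] sc]] _] := circ b.
  exists (V x + V y)%MS; split; first exact: rank2.
  rewrite eS sum3 // in sc.
  have cz : c z != 0.
    apply/negP => /eqP cz0; rewrite cz0 scale0r addr0 in sc.
    have [hx hy] := ind _ _ sc.
    by move: wS cw; rewrite eS !inE => /orP[/orP[]|] /eqP ->; rewrite ?hx ?hy ?cz0 eqxx.
  move=> w' ew; rewrite /proj_pt genmxE.
  have : w' \in [set x; y; z] by rewrite -eS inE.
  rewrite !inE => /orP[/orP[]|] /eqP ->; [exact: addsmxSl | exact: addsmxSr |].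
  move/eqP: sc; rewrite addrA addr_eq0 => /eqP h.
  rewrite -[V z]scale1r -(mulVf cz) -scalerA -(opprK (c z *: V z)) -h.
  apply: scalemx_sub; rewrite eqmx_opp.
  by apply: addmx_sub_adds; apply: scalemx_sub.
- move=> V V' mu mu' [[V0 rel] circ] [[V0' rel'] circ']; split.
    case=> lB [lW [lB0 [lW0 [hV _]]]] w.
    by rewrite /proj_pt hV; apply: eq_genmx; apply: eqmx_sym; exact: eqmx_scale.
  move=> hP.
  have : forall w, exists k, V' w = k *: V w by move=> w; apply: gen_prop; rewrite hP.
  case/fin_all_exists => lW hW.
  have lW0 : forall w, lW w != 0.
    by move=> w; apply: contraNneq (V0' w) => e; rewrite hW e scale0r.
  have hb : forall b, exists l : K, l != 0 /\
      forall w, E b w -> mu' b w = l * (lW w)^-1 * mu b w.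
    move=> b; have [[w0 ew0 m0] s0] := rel b; have [[w1 ew1 m1] s1] := rel' b.
    have [l hl] : exists l, forall w, w \in nbhd E b -> mu' b w * lW w = l * mu b w.
      apply: (circuit_unique (circ b) _ s0); first by exists w0; rewrite ?inE.
      by rewrite -[RHS]s1; apply: eq_bigr => w _; rewrite hW scalerA.
    exists l; split.
      apply: contraNneq m1 => l0; have := hl w1; rewrite inE l0 mul0r => /(_ ew1) /eqP.
      by rewrite mulf_eq0 (negbTE (lW0 w1)) orbF.
    by move=> w ew; rewrite mulrAC -hl ?inE // mulfK.
  case/fin_all_exists: hb => lB hB.
  exists lB, lW; split; first by move=> b; case: (hB b).
  by split=> //; split=> // b w; exact: (hB b).2 w.
- move=> T [hpt hb].
  pose V w := nz_row (T w).
  have V0 : forall w, V w != 0.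
    move=> w; rewrite nz_row_eq0; have [r1 _] := hpt w.
    by apply: contra_eqN r1 => /eqP ->; rewrite mxrank0.
  have VT : forall w, proj_pt (V w) = T w.
    move=> w; have [r1 g] := hpt w; rewrite /proj_pt -g; apply/genmxP.
    by rewrite -(mxrank_leqif_eq (nz_row_sub _)).2 rank_rV V0 r1.
  have ind : forall b p q, E b p -> E b q -> p != q -> indep (V p) (V q).
    move=> b p q ep eq npq; apply: neq_indep; rewrite ?V0 // !VT.
    exact: (hb b).1.
  have hmu : forall b, exists c : {ffun W -> K},
      (exists2 w, E b w & c w != 0) /\ \sum_(w in nbhd E b) c w *: V w = 0.
    move=> b; have c3 : #|nbhd E b| = 3%N := hdeg b.
    have [x [y [z [nxy nxz nyz eS]]]] := card3 c3.
    have ex : E b x.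
      have : x \in nbhd E b by rewrite eS !inE eqxx.
      by rewrite inE.
    have ey : E b y.
      have : y \in nbhd E b by rewrite eS !inE eqxx orbT.
      by rewrite inE.
    have ez : E b z.
      have : z \in nbhd E b by rewrite eS !inE eqxx !orbT.
      by rewrite inE.
    have [L [rL hL]] := (hb b).2.
    have VL : forall w, E b w -> (V w <= L)%MS.
      by move=> w ew; rewrite -genmxE -/(proj_pt _) VT; apply: hL.
    have [a [a' hz]] := span2 rL (ind b x y ex ey nxy) (VL _ ex) (VL _ ey) (VL _ ez).
    exists [ffun w => if w == x then a else if w == y then a' else if w == z then -1 else 0].
    have nzx : z != x by rewrite eq_sym.
    have nzy : z != y by rewrite eq_sym.
    have nyx : y != x by rewrite eq_sym.
    split.
      by exists z => //; rewrite ffunE (negbTE nzx) (negbTE nzy) eqxx oppr_eq0 oner_eq0.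
    rewrite eS sum3 // !ffunE eqxx (negbTE nzx) (negbTE nzy) (negbTE nyx) !eqxx.
    by rewrite scaleN1r hz addrA subrr.
  case/fin_all_exists: hmu => f hf.
  exists V, (fun b w => f b w); split=> //; split.
    by split=> // b; have [h1 h2] := hf b.
  move=> b; have c3 : #|nbhd E b| = 3%N := hdeg b.
  apply: circ3 => //.
    by move=> p q; rewrite !inE; apply: ind.
  have [[w ew cw] s] := hf b.
  by exists (fun w => f b w); split => //; exists w; rewrite ?inE.
Qed.

Theorem proposition3p3 (R : realType) (B W : finType) (E : B -> W -> bool)
    (d : nat) (hd : (1 <= d)%N) (hdeg : black_deg3 E) :
  [/\ (* the induced map is a TCD map *)
      forall (V : W -> 'rV[R[i]]_(d.+1)) (mu : B -> W -> R[i]),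
        circuit_config E V mu -> TCD_map E (fun w => proj_pt (V w)),
      (* it is well defined and injective on gauge classes *)
      forall (V V' : W -> 'rV[R[i]]_(d.+1)) (mu mu' : B -> W -> R[i]),
        circuit_config E V mu -> circuit_config E V' mu' ->
        (gauge_equiv E V mu V' mu' <-> (forall w, proj_pt (V w) = proj_pt (V' w)))
    & (* and surjective onto TCD maps *)
      forall T : W -> 'M[R[i]]_(d.+1), TCD_map E T ->
        exists (V : W -> 'rV[R[i]]_(d.+1)) (mu : B -> W -> R[i]),
          circuit_config E V mu /\ forall w, proj_pt (V w) = T w].
Proof. exact: main_gen. Qed.
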